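(* Let $n=p^{2}q^{2}$ with primes $2\leq p<q$. Let $\mathcal{D}_{S_{1}},\mathcal{D}_{S_{2}}$ be subsets of $\mathcal{D}_{[n]}\setminus\{n\}$. If $\mathrm{Spec}(\mathrm{ICG}(n,\mathcal{D}_{S_{1}}))=\mathrm{Spec}(\mathrm{ICG}(n,\mathcal{D}_{S_{2}}))$, then $\mathcal{D}_{S_{1}}=\mathcal{D}_{S_{2}}$.
   Context: For an integer $n\ge1$, identify $\mathbb{Z}_n$ with $[n]=\{1,\dots,n\}$ ($n$ playing the role of $0$). For a positive divisor $d$ of $n$, $G_n(d)=\{j\in[n]:\gcd(j,n)=d\}$. $\mathcal{D}_{[n]}$ denotes the set of all positive divisors of $n$. For $\mathcal{D}\subseteq\mathcal{D}_{[n]}\setminus\{n\}$, $\mathrm{ICG}(n,\mathcal{D})$ denotes the circulant graph $\mathrm{Cay}(\mathbb{Z}_n,S)$ with connection set $S=\bigcup_{d\in\mathcal{D}}G_n(d)$ (vertex set $\mathbb{Z}_n$, $g\sim h$ iff $h-g\in S$); we write $\mathcal{D}=\mathcal{D}_S$. $\mathrm{Spec}$ denotes the multiset of eigenvalues of the adjacency matrix. *)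

(* Defs.v *)
From mathcomp Require Import all_boot all_order all_algebra all_field.
Set Implicit Arguments. Unset Strict Implicit. Unset Printing Implicit Defensive.
Import GRing.Theory Num.Theory.
Local Open Scope ring_scope.

(* Z_n is represented by 'I_n = {0,...,n-1}; the residue 0 plays the role of n
   (gcdn 0 n = n, so 0 lies in G_n(n) as in the paper). *)

Definition Gn (n d : nat) : {set 'I_n} := [set j : 'I_n | gcdn j n == d].

(* connection set S = union of G_n(d), d in D ; divisors d < n are coded in 'I_n *)
Definition ICG_conn (n : nat) (D : {set 'I_n}) : {set 'I_n} :=
  \bigcup_(d in D) Gn n (val d).

Definition ICG_adj (n : nat) (D : {set 'I_n}) : 'M[algC]_n :=
  \matrix_(g < n, h < n)
     (if [exists s in ICG_conn D, val s == (h + n - g) %% n]%N then 1 else 0).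

Definition Spec (n : nat) (A : 'M[algC]_n) : algC -> nat :=
  fun lam => mup lam (char_poly A).

(* Main.v *)
Require Import Defs.
From mathcomp Require Import all_boot all_order all_algebra all_field.
From mathcomp Require Import zify ring lra.
Set Implicit Arguments. Unset Strict Implicit. Unset Printing Implicit Defensive.
Import Order.TTheory GRing.Theory Num.Theory.

Local Open Scope ring_scope.

Definition b2i (b : bool) : int := if b then 1 else 0.

Definition rr (p : int) (i u : nat) : int :=
  match i, u with
  | 0%N, 0%N => 0 | 0%N, 1%N => - p | 0%N, _ => p * p - p
  | 1%N, 0%N => -1 | 1%N, _ => p - 1
  | _, _ => 1 end.
Arguments rr : simpl never.

Definition Lam (p q : int) (x : nat -> nat -> bool) (u v : nat) : int :=
  let T i k := b2i (x i k) * rr p i u * rr q k v in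
  T 0%N 0%N + T 0%N 1%N + T 0%N 2%N + T 1%N 0%N + T 1%N 1%N + T 1%N 2%N
  + T 2%N 0%N + T 2%N 1%N.

Definition wt (p u : nat) : nat :=
  match u with 0 => p * p - p | 1 => p - 1 | _ => 1 end%N.

Definition cnt (p q : nat) (x : nat -> nat -> bool) (P : pred int) : nat :=
  (\sum_(u < 3) \sum_(v < 3) wt p u * wt q v * P (Lam p%:Z q%:Z x u v))%N.

Definition xofm (m : nat) (i k : nat) : bool := odd (m %/ 2 ^ (3 * i + k)).
Definition mask (x : nat -> nat -> bool) : nat :=
  (x 0 0 + 2 * x 0 1 + 4 * x 0 2 + 8 * x 1 0 + 16 * x 1 1 + 32 * x 1 2
   + 64 * x 2 0 + 128 * x 2 1)%N.

Lemma mask_bits x :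
  (xofm (mask x) 0 0 = x 0 0 /\ xofm (mask x) 0 1 = x 0 1 /\
      xofm (mask x) 0 2 = x 0 2 /\ xofm (mask x) 1 0 = x 1 0 /\
      xofm (mask x) 1 1 = x 1 1 /\ xofm (mask x) 1 2 = x 1 2 /\
      xofm (mask x) 2 0 = x 2 0 /\ xofm (mask x) 2 1 = x 2 1)%N.
Proof.
rewrite /mask.
by case: (x 0 0)%N; case: (x 0 1)%N; case: (x 0 2)%N; case: (x 1 0)%N;
   case: (x 1 1)%N; case: (x 1 2)%N; case: (x 2 0)%N; case: (x 2 1)%N.
Qed.

Lemma mask_lt x : (mask x < 256)%N.
Proof.
rewrite /mask.
by case: (x 0 0)%N; case: (x 0 1)%N; case: (x 0 2)%N; case: (x 1 0)%N;
   case: (x 1 1)%N; case: (x 1 2)%N; case: (x 2 0)%N; case: (x 2 1)%N.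
Qed.

Lemma Lam_mask p q x u v : Lam p q (xofm (mask x)) u v = Lam p q x u v.
Proof. by rewrite /Lam /=; case: (mask_bits x) => -> [-> [-> [-> [-> [-> [-> ->]]]]]]. Qed.

Definition uvs : seq (nat * nat) :=
  [:: (0,0);(0,1);(0,2);(1,0);(1,1);(1,2);(2,0);(2,1);(2,2)]%N.
Definition vals (q : int) (x : nat -> nat -> bool) :=
  [seq Lam 2 q x uv.1 uv.2 | uv <- uvs].
Definition key q x := sort (fun a b : int => a <= b) (undup (vals q x)).
Definition check (q : int) := uniq [seq key q (xofm m) | m <- iota 0 256].

Lemma check3 : check 3. Proof. by vm_compute. Qed.
Lemma check5 : check 5. Proof. by vm_compute. Qed.
Lemma check7 : check 7. Proof. by vm_compute. Qed.
Lemma check11 : check 11. Proof. by vm_compute. Qed.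

Local Open Scope ring_scope.

Lemma b2i01 b : b2i b = 0 \/ b2i b = 1. Proof. by case: b; [right|left]. Qed.

Definition rc (p : int) (i u : nat) : int :=
  match i, u with
  | 0%N, 0%N => 0 | 0%N, 1%N => -1 | 0%N, _ => p - 1
  | 1%N, 0%N => 0 | 1%N, _ => 1
  | _, _ => 0 end.
Arguments rc : simpl never.

Lemma Lam_p0 p q x u v : (u < 3)%N ->
  Lam p q x u v = Lam 0 q x 0 v + p *
   (let T i k := b2i (x i k) * rc p i u * rr q k v in
    T 0%N 0%N + T 0%N 1%N + T 0%N 2%N + T 1%N 0%N + T 1%N 1%N + T 1%N 2%N
  + T 2%N 0%N + T 2%N 1%N).
Proof.
by case: u => [|[|[|]]] // _; rewrite /Lam /rr /rc /=; ring.
Qed.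

Lemma Lam_T p q x u v : Lam p q x u v = Lam q p (fun i k => x k i) v u.
Proof.
rewrite /Lam /=; move: (rr p 0 u) (rr p 1 u) (rr p 2 u) (rr q 0 v) (rr q 1 v) (rr q 2 v).
by move=> *; ring.
Qed.

Lemma cnt_T p q x P : cnt p q x P = cnt q p (fun i k => x k i) P.
Proof.
rewrite /cnt exchange_big /=; apply: eq_bigr => v _; apply: eq_bigr => u _.
by rewrite Lam_T [(wt p u * _)%N]mulnC.
Qed.

Definition alpha q x v := Lam 0 q x 0 v.

Lemma Lam_modp p q x u v : (u < 3)%N -> (Lam p q x u v %% p)%Z = (alpha q x v %% p)%Z.
Proof. by move=> u3; rewrite (Lam_p0 p q x v u3) addrC mulrC modzMDl. Qed.

Lemma sum_wt p : (0 < p)%N -> (\sum_(u < 3) wt p u = p * p)%N.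
Proof. move=> p0; rewrite !big_ord_recr big_ord0 /=. have := leq_pmulr p p0. move: (p * p)%N => P; lia. Qed.

Definition S3 q (a : nat -> bool) := (wt q 0 * a 0%N + wt q 1 * a 1%N + wt q 2 * a 2%N)%N.

Lemma cnt_modp p q x r : (0 < p)%N ->
  cnt p q x (fun z => (z %% p%:Z)%Z == r) =
  (p * p * S3 q (fun v => (alpha q%:Z x v %% p%:Z)%Z == r))%N.
Proof.
move=> p0; rewrite /cnt.
rewrite (eq_bigr (fun u : 'I_3 => wt p u * S3 q (fun v => (alpha q%:Z x v %% p%:Z)%Z == r)))%N.
  by rewrite -big_distrl /= sum_wt.
move=> u _; rewrite /S3 !big_ord_recr big_ord0 /= !Lam_modp //; ring.
Qed.

Lemma S3_inj q a b : (3 <= q)%N -> S3 q a = S3 q b -> forall v, (v < 3)%N -> a v = b v.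
Proof.
move=> q3 H v v3.
have Q: (3 * q <= q * q)%N by rewrite leq_mul2r q3 orbT.
move: H; rewrite /S3 /wt; move: (q * q)%N Q => QQ Q.
case: v v3 => [|[|[|]]] // _;
case: (a 0%N); case: (a 1%N); case: (a 2%N); case: (b 0%N); case: (b 1%N); case: (b 2%N);
  move=> //=; lia.
Qed.

Lemma small0 (p : nat) (d : int) : (3 <= p)%N -> -2 <= d <= 2 -> (p%:Z %| d)%Z -> d = 0.
Proof.
move=> p3 /andP[d1 d2]; rewrite dvdzE /= => H.
have [->//|dn0] := eqVneq d 0.
have := dvdn_leq _ H; rewrite absz_gt0 dn0 => /(_ isT); lia.
Qed.

Lemma dvd_cancel (p q : nat) (z : int) : prime p -> prime q -> p != q ->
  (p%:Z %| q%:Z * z)%Z -> (p%:Z %| z)%Z.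
Proof.
move=> pp qp pq; rewrite Gauss_dvdzr // coprimezE /= prime_coprime //.
by rewrite dvdn_prime2.
Qed.

Lemma alpha_eq q x v : alpha q x v =
  (b2i (x 2%N 0%N) - b2i (x 1%N 0%N)) * rr q 0 v + (b2i (x 2%N 1%N) - b2i (x 1%N 1%N)) * rr q 1 v
   - b2i (x 1%N 2%N) * rr q 2 v.
Proof.
rewrite /alpha /Lam /=.
have -> : rr 0 0 0 = 0 by []. have -> : rr 0 1 0 = -1 by []. have -> : rr 0 2 0 = 1 by [].
move: (rr q 0 v) (rr q 1 v) (rr q 2 v) => *; ring.
Qed.

Lemma bnd2 a b c d : -2 <= (b2i a - b2i b) - (b2i c - b2i d) <= 2.
Proof. by case: a; case: b; case: c; case: d. Qed.

Lemma bnd1 a b : -2 <= b2i a - b2i b <= 2.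
Proof. by case: a; case: b. Qed.

Lemma half p q x y : prime p -> prime q -> p != q -> (3 <= p)%N -> (3 <= q)%N ->
  (forall P, cnt p q x P = cnt p q y P) ->
  [/\ b2i (x 2 0)%N - b2i (x 1 0)%N = b2i (y 2 0)%N - b2i (y 1 0)%N,
      b2i (x 2 1)%N - b2i (x 1 1)%N = b2i (y 2 1)%N - b2i (y 1 1)%N & x 1%N 2%N = y 1%N 2%N].
Proof.
move=> pp qp pq p3 q3 H.
have p0 : (0 < p)%N by lia.
have Hv : forall v, (v < 3)%N -> (p%:Z %| alpha q x v - alpha q y v)%Z.
  move=> v v3; set r := (alpha q x v %% p)%Z.
  have := H (fun z => (z %% p%:Z)%Z == r).
  rewrite !cnt_modp // => /eqP; rewrite eqn_pmul2l ?muln_gt0 ?p0 // => /eqP.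
  move=> /(S3_inj q3) /(_ v v3); rewrite eqxx => /esym/eqP E.
  by rewrite -eqz_mod_dvd E /r.
set D0 := (b2i (x 2 0)%N - b2i (x 1 0)%N) - (b2i (y 2 0)%N - b2i (y 1 0)%N).
set D1 := (b2i (x 2 1)%N - b2i (x 1 1)%N) - (b2i (y 2 1)%N - b2i (y 1 1)%N).
have eD0 : D0 = 0.
  apply: (small0 p3); first exact: bnd2.
  apply: (dvd_cancel pp qp pq); apply: (dvd_cancel pp qp pq).
  have -> : q%:Z * (q%:Z * D0) = (alpha q x 2 - alpha q y 2) - (alpha q x 1 - alpha q y 1).
    rewrite !alpha_eq /rr /= /D0; ring.
  by apply: rpredB; apply: Hv.
have eD1 : D1 = 0.
  apply: (small0 p3); first exact: bnd2.
  apply: (dvd_cancel pp qp pq).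
  have -> : q%:Z * D1 = (alpha q x 1 - alpha q y 1) - (alpha q x 0 - alpha q y 0) + q%:Z * D0.
    rewrite !alpha_eq /rr /= /D0 /D1; ring.
  by rewrite eD0 mulr0 addr0; apply: rpredB; apply: Hv.
have eD2 : b2i (y 1 2)%N - b2i (x 1 2)%N = 0.
  apply: (small0 p3); first exact: bnd1.
  have -> : b2i (y 1 2)%N - b2i (x 1 2)%N = (alpha q x 0 - alpha q y 0) + D1.
    rewrite !alpha_eq /rr /= /D1; ring.
  by rewrite eD1 addr0; apply: Hv.
split.
- by apply/eqP; rewrite -subr_eq0 -/D0 eD0.
- by apply/eqP; rewrite -subr_eq0 -/D1 eD1.
- by move: eD2; case: (y 1 2)%N; case: (x 1 2)%N.
Qed.

Local Open Scope ring_scope.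

Lemma rr_abs (p : int) i u : 2 <= p -> (i < 3)%N -> (u < 3)%N -> `|rr p i u| <= rr p i 2.
Proof.
move=> p2; case: i => [|[|[|]]] //; case: u => [|[|[|]]] // _ _; rewrite /rr /=.
all: rewrite ?normrN ?normr0 ?normr1.
all: try (rewrite ger0_norm; nia).
all: try nia.
Qed.

Lemma term_le b a A c C : `|a| <= A -> `|c| <= C -> b2i b * a * c <= b2i b * A * C.
Proof.
move=> ha hc; case: b; rewrite /b2i ?mul1r ?mul0r //.
apply: (le_trans (ler_norm _)); rewrite normrM ler_pM //.
Qed.

Lemma Lam_le (p q : int) x u v : 2 <= p -> 2 <= q -> (u < 3)%N -> (v < 3)%N ->
  Lam p q x u v <= Lam p q x 2 2.
Proof.
move=> p2 q2 u3 v3; rewrite /Lam /=.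
repeat apply: lerD; apply: term_le; exact: rr_abs.
Qed.

Lemma cnt_pos p q y P : (0 < cnt p q y P)%N ->
  exists u v : 'I_3, P (Lam p%:Z q%:Z y u v).
Proof.
case E: [exists u : 'I_3, [exists v : 'I_3, P (Lam p%:Z q%:Z y u v)]].
  by move=> _; case/existsP: E => u /existsP[v Pv]; exists u, v.
rewrite /cnt big1 // => u _; rewrite big1 // => v _.
by move/negbT/existsPn/(_ u)/existsPn/(_ v)/negbTE: E => ->; rewrite muln0.
Qed.

Lemma deg_le p q x y : (2 <= p)%N -> (2 <= q)%N -> (forall P, cnt p q x P = cnt p q y P) ->
  Lam p%:Z q%:Z x 2 2 <= Lam p%:Z q%:Z y 2 2.
Proof.
move=> p2 q2 H.
have : (0 < cnt p q y (fun z : int => (Lam p%:Z q%:Z x 2 2 <= z)%R))%N.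
  rewrite -H /cnt (bigD1 (2 : 'I_3)) //= (bigD1 (2 : 'I_3)) //= lexx.
  by rewrite -addnA ltn_addr.
case/cnt_pos => u [v] /le_trans; apply; apply: Lam_le => //; rewrite ?lez_nat //.
Qed.

Lemma deg_eq p q x y : (2 <= p)%N -> (2 <= q)%N -> (forall P, cnt p q x P = cnt p q y P) ->
  Lam p%:Z q%:Z x 2 2 = Lam p%:Z q%:Z y 2 2.
Proof.
move=> p2 q2 H; apply/eqP; rewrite eq_le !deg_le // => P; exact/esym.
Qed.

Lemma b2i_inj a b : b2i a = b2i b -> a = b.
Proof. by case: a; case: b. Qed.

Lemma b2i_rng a b : -1 <= b2i a - b2i b <= 1.
Proof. by case: a; case: b. Qed.

Lemma final3 (p q a c d : int) : 3 <= p -> p < q -> -1 <= a <= 1 -> -1 <= c <= 1 ->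
  -1 <= d <= 1 -> a * (p - 1) * (q - 1) + c * (q - 1) + d * (p - 1) = 0 ->
  [/\ a = 0, c = 0 & d = 0].
Proof.
move=> p3 pq /andP[a1 a2] /andP[c1 c2] /andP[d1 d2] E.
have : a = -1 \/ a = 0 \/ a = 1 by lia.
have : c = -1 \/ c = 0 \/ c = 1 by lia.
have : d = -1 \/ d = 0 \/ d = 1 by lia.
by move=> [?|[?|?]] [?|[?|?]] [?|[?|?]]; subst; split => //; nia.
Qed.

Definition agree (x y : nat -> nat -> bool) :=
  forall i k, (i < 3)%N -> (k < 3)%N -> ~~ ((i == 2%N) && (k == 2%N)) -> x i k = y i k.

Lemma main_ge3 p q x y : prime p -> prime q -> (3 <= p)%N -> (p < q)%N ->
  (forall P, cnt p q x P = cnt p q y P) -> agree x y.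
Proof.
move=> pp qp p3 pq H.
have pnq : p != q by rewrite neq_ltn pq.
have q3 : (3 <= q)%N by apply: leq_trans pq; apply: ltnW.
have [H0 H1 H2] := half pp qp pnq p3 q3 H.
have [H0' H1' H2'] := half qp pp (negbT (gtn_eqF pq)) q3 p3
   (fun P => etrans (esym (cnt_T p q x P)) (etrans (H P) (cnt_T p q y P))).
simpl in H0', H1', H2'.
have Hd := deg_eq (ltnW p3) (ltnW q3) H.
have H11 : x 1%N 1%N = y 1%N 1%N.
  by apply: b2i_inj; move: H1'; rewrite H2; lra.
have e20 : b2i (x 2%N 0%N) = b2i (x 1%N 0%N) - b2i (y 1%N 0%N) + b2i (y 2%N 0%N) by lra.
have e02 : b2i (x 0%N 2%N) = b2i (x 0%N 1%N) - b2i (y 0%N 1%N) + b2i (y 0%N 2%N) by lra.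
set a := b2i (x 0%N 0%N) - b2i (y 0%N 0%N).
set c := b2i (x 1%N 0%N) - b2i (y 1%N 0%N).
set d := b2i (x 0%N 1%N) - b2i (y 0%N 1%N).
have E : p%:Z * q%:Z * (a * (p%:Z - 1) * (q%:Z - 1) + c * (q%:Z - 1) + d * (p%:Z - 1))
     = Lam p q x 2 2 - Lam p q y 2 2.
  rewrite /Lam /rr /= e20 e02 H2 H2' H11 /a /c /d.
  ring.
have E0 : a * (p%:Z - 1) * (q%:Z - 1) + c * (q%:Z - 1) + d * (p%:Z - 1) = 0.
  have pz : p%:Z != 0 by apply/eqP; lia.
  have qz : q%:Z != 0 by apply/eqP; lia.
  move: E; rewrite Hd subrr => /eqP; rewrite !mulf_eq0 (negbTE pz) (negbTE qz) /=.
  by move/eqP.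
have [] := final3 _ _ (b2i_rng _ _) (b2i_rng _ _) (b2i_rng _ _) E0.
- by rewrite lez_nat.
- by rewrite ltz_nat.
move=> /eqP; rewrite subr_eq0 => /eqP/b2i_inj e00.
move=> /eqP; rewrite subr_eq0 => /eqP e10.
move=> /eqP; rewrite subr_eq0 => /eqP e01.
have e20' : x 2%N 0%N = y 2%N 0%N by apply: b2i_inj; rewrite e20 e10; ring.
have e02' : x 0%N 2%N = y 0%N 2%N by apply: b2i_inj; rewrite e02 e01; ring.
move/b2i_inj: e10 => e10; move/b2i_inj: e01 => e01.
by move=> [|[|[|i]]] [|[|[|k]]].
Qed.

Local Open Scope ring_scope.

Lemma uniq_map_eq (T : eqType) (f : nat -> T) s a b :
  uniq (map f s) -> a \in s -> b \in s -> f a = f b -> a = b.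
Proof.
elim: s => //= c s IH /andP[fc u]; rewrite !inE => /orP[/eqP->|aS] /orP[/eqP->|bS] E //.
- by move: fc; rewrite E map_f.
- by move: fc; rewrite -E map_f.
- exact: IH.
Qed.

Lemma wt_gt0 p u : (1 < p)%N -> (0 < wt p u)%N.
Proof.
move=> p1; case: u => [|[|u]] /=; try lia.
have : (2 * p <= p * p)%N by rewrite leq_mul2r p1 orbT.
move: (p * p)%N => P; lia.
Qed.

Lemma cnt_incl p q x y : (1 < p)%N -> (1 < q)%N -> (forall P, cnt p q x P = cnt p q y P) ->
  forall u v : 'I_3, exists u' v' : 'I_3, Lam p q x u v = Lam p q y u' v'.
Proof.
move=> p1 q1 H u v.
have : (0 < cnt p q y (fun z => z == Lam p q x u v))%N.
  rewrite -H /cnt (bigD1 u) //= (bigD1 v) //= eqxx muln1.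
  by rewrite -addnA ltn_addr // muln_gt0 !wt_gt0.
by case/cnt_pos => u' [v'] /eqP E; exists u', v'.
Qed.

Definition ev3 (c : int * int * int) (q : int) := c.1.1 + c.1.2 * q + c.2 * q * q.
Definition rr3 (k v : nat) : int * int * int :=
  match k, v with
  | 0%N, 0%N => (0, 0, 0) | 0%N, 1%N => (0, -1, 0) | 0%N, _ => (0, -1, 1)
  | 1%N, 0%N => (-1, 0, 0) | 1%N, _ => (-1, 1, 0)
  | _, _ => (1, 0, 0) end.
Arguments rr3 : simpl never.
Definition sc3 (a : int) (c : int * int * int) := (a * c.1.1, a * c.1.2, a * c.2).
Definition ad3 (c d : int * int * int) := (c.1.1 + d.1.1, c.1.2 + d.1.2, c.2 + d.2).
Definition Lam3 (x : nat -> nat -> bool) (u v : nat) : int * int * int :=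
  let T i k := sc3 (b2i (x i k) * rr 2 i u) (rr3 k v) in
  ad3 (ad3 (ad3 (ad3 (ad3 (ad3 (ad3 (T 0%N 0%N) (T 0%N 1%N)) (T 0%N 2%N)) (T 1%N 0%N))
     (T 1%N 1%N)) (T 1%N 2%N)) (T 2%N 0%N)) (T 2%N 1%N).

Lemma rr_ev3 q k v : rr q k v = ev3 (rr3 k v) q.
Proof. case: k => [|[|k]]; case: v => [|[|v]]; rewrite /rr /rr3 /ev3 /=. all: try ring. Qed.

Lemma Lam_ev3 q x u v : Lam 2 q x u v = ev3 (Lam3 x u v) q.
Proof.
rewrite /Lam /Lam3 /ad3 /sc3 /= !(rr_ev3 q) /ev3 /=.
move: (rr 2 0 u) (rr 2 1 u) (rr 2 2 u) => *; ring.
Qed.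

Lemma Lam3_mask x u v : Lam3 (xofm (mask x)) u v = Lam3 x u v.
Proof. by rewrite /Lam3 /=; case: (mask_bits x) => -> [-> [-> [-> [-> [-> [-> ->]]]]]]. Qed.

Definition bnd3 := all (fun m => all (fun uv => let c := Lam3 (xofm m) uv.1 uv.2 in
   [&& (absz c.1.1 <= 4)%N, (absz c.1.2 <= 4)%N & (absz c.2 <= 4)%N]) uvs) (iota 0 256).
Lemma bnd3T : bnd3. Proof. by vm_compute. Qed.

Lemma uvsP (u v : nat) : (u < 3)%N -> (v < 3)%N -> (u, v) \in uvs.
Proof. by case: u => [|[|[|u]]]; case: v => [|[|[|v]]]. Qed.

Lemma Lam3_bnd x (u v : 'I_3) : let c := Lam3 x u v in
   [&& (absz c.1.1 <= 4)%N, (absz c.1.2 <= 4)%N & (absz c.2 <= 4)%N].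
Proof.
rewrite -Lam3_mask.
have H := bnd3T; rewrite /bnd3 in H.
move/allP: H => /(_ (mask x)); rewrite mem_iota add0n leq0n mask_lt => /(_ isT).
by move/allP/(_ (nat_of_ord u, nat_of_ord v) (uvsP (ltn_ord u) (ltn_ord v))).
Qed.


Local Open Scope ring_scope.

Lemma ev3_0 (e0 e1 e2 q : int) : 9 <= q -> -8 <= e0 <= 8 -> -8 <= e1 <= 8 -> -8 <= e2 <= 8 ->
  e0 + e1 * q + e2 * q * q = 0 -> [/\ e0 = 0, e1 = 0 & e2 = 0].
Proof.
move=> q9 b0 b1 b2 E.
have e2z : e2 = 0 by nia.
move: E; rewrite e2z => E.
have e1z : e1 = 0 by nia.
by split => //; move: E; rewrite e1z; lia.
Qed.

Lemma ev3_inj c d (q : int) : 9 <= q ->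
  [&& (absz c.1.1 <= 4)%N, (absz c.1.2 <= 4)%N & (absz c.2 <= 4)%N] ->
  [&& (absz d.1.1 <= 4)%N, (absz d.1.2 <= 4)%N & (absz d.2 <= 4)%N] ->
  ev3 c q = ev3 d q -> c = d.
Proof.
case: c => [[c0 c1] c2]; case: d => [[d0 d1] d2] /= q9 /and3P[h0 h1 h2] /and3P[k0 k1 k2].
rewrite /ev3 /= => E.
have b0 : -8 <= c0 - d0 <= 8 by apply/andP; split; lia.
have b1 : -8 <= c1 - d1 <= 8 by apply/andP; split; lia.
have b2 : -8 <= c2 - d2 <= 8 by apply/andP; split; lia.
have E' : (c0 - d0) + (c1 - d1) * q + (c2 - d2) * q * q =
    (c0 + c1 * q + c2 * q * q) - (d0 + d1 * q + d2 * q * q) by ring.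
rewrite E subrr in E'.
have [z0 z1 z2] := ev3_0 q9 b0 b1 b2 E'.
by congr (_, _, _); lia.
Qed.

Lemma Lam_transfer q x y (u v u' v' : 'I_3) : 9 <= q ->
  Lam 2 q x u v = Lam 2 q y u' v' -> Lam 2 11 x u v = Lam 2 11 y u' v'.
Proof.
move=> q9; rewrite !Lam_ev3 => /(ev3_inj q9 (Lam3_bnd x u v) (Lam3_bnd y u' v')) ->.
by [].
Qed.

Lemma key_eq q x y :
  (forall u v : 'I_3, exists u' v' : 'I_3, Lam 2 q x u v = Lam 2 q y u' v') ->
  (forall u v : 'I_3, exists u' v' : 'I_3, Lam 2 q y u v = Lam 2 q x u' v') ->
  key q x = key q y.
Proof.
move=> Hxy Hyx; apply/perm_sortP.
- by move=> a b; apply: le_total.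
- by move=> a b c; apply: le_trans.
- by move=> a b; apply: le_anti.
apply: uniq_perm; rewrite ?undup_uniq // => z; rewrite !mem_undup.
have sub : forall x y, (forall u v : 'I_3, exists u' v' : 'I_3, Lam 2 q x u v = Lam 2 q y u' v') ->
    z \in vals q x -> z \in vals q y.
  move=> x' y' H /mapP[[u v] uvin ->] /=.
  have [u3 v3] : (u < 3)%N /\ (v < 3)%N.
    by move: uvin; case: u => [|[|[|u]]]; case: v => [|[|[|v]]].
  have [u' [v' E]] := H (Ordinal u3) (Ordinal v3).
  rewrite /= in E; rewrite E; apply/mapP; exists (nat_of_ord u', nat_of_ord v') => //.
  exact: uvsP.
by apply/idP/idP; apply: sub.
Qed.

Lemma key_agree q x y : check q -> key q x = key q y -> agree x y.
Proof.
move=> ch E.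
have : mask x = mask y.
  apply: (uniq_map_eq ch); rewrite ?mem_iota ?add0n ?leq0n ?mask_lt //.
  rewrite /key /vals.
  have Ex : [seq Lam 2 q (xofm (mask x)) uv.1 uv.2 | uv <- uvs] = vals q x.
    by apply: eq_map => uv; rewrite Lam_mask.
  have Ey : [seq Lam 2 q (xofm (mask y)) uv.1 uv.2 | uv <- uvs] = vals q y.
    by apply: eq_map => uv; rewrite Lam_mask.
  by rewrite Ex Ey.
move=> M; have [a0 [a1 [a2 [a3 [a4 [a5 [a6 a7]]]]]]] := mask_bits x.
have [b0 [b1 [b2 [b3 [b4 [b5 [b6 b7]]]]]]] := mask_bits y.
rewrite M in a0 a1 a2 a3 a4 a5 a6 a7.
move=> [|[|[|i]]] [|[|[|k]]] //= _ _ _; congruence.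
Qed.

Lemma main_p2 q x y : prime q -> (2 < q)%N ->
  (forall P, cnt 2 q x P = cnt 2 q y P) -> agree x y.
Proof.
move=> qp q2 H.
have Hxy := cnt_incl (isT : (1 < 2)%N) (ltnW q2) H.
have Hyx := cnt_incl (isT : (1 < 2)%N) (ltnW q2) (fun P => esym (H P)).
have [qs | ql] := ltnP q 11.
  have : [|| q == 3, q == 5 | q == 7]%N.
    by clear H Hxy Hyx; move: qp q2 qs; do 11! (case: q => [|q] //).
  case/or3P => /eqP qe; subst q.
  - by apply: (key_agree check3); apply: key_eq.
  - by apply: (key_agree check5); apply: key_eq.
  - by apply: (key_agree check7); apply: key_eq.
have q9 : 9 <= q%:Z by rewrite lez_nat; apply: leq_trans ql.
apply: (key_agree check11); apply: key_eq => u v.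
- by have [u' [v' E]] := Hxy u v; exists u', v'; apply: Lam_transfer E.
- by have [u' [v' E]] := Hyx u v; exists u', v'; apply: Lam_transfer E.
Qed.

Local Close Scope ring_scope.

Definition lp (p j : nat) : nat := if p ^ 2 %| j then 2 else if p %| j then 1 else 0.

Lemma lp_lt3 p j : lp p j < 3.
Proof. by rewrite /lp; case: ifP => _ //; case: ifP. Qed.

Lemma lp_min p s : prime p -> 0 < s -> lp p s = minn (logn p s) 2.
Proof.
move=> pp s0; rewrite /lp -{2}(expn1 p) !pfactor_dvdn //.
by case: (logn p s) => [|[|l]].
Qed.

Lemma logn_pq p q r a b : prime p -> prime q ->
  logn r (p ^ a * q ^ b) = a * (r == p) + b * (r == q).
Proof.
move=> pp qp; rewrite lognM ?expn_gt0 ?prime_gt0 // !lognX !logn_prime //.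
Qed.

Lemma gcd_pq p q s : prime p -> prime q -> p != q ->
  gcdn s (p ^ 2 * q ^ 2) = p ^ lp p s * q ^ lp q s.
Proof.
move=> pp qp pq.
have [->|s0] := posnP s; first by rewrite gcd0n /lp !dvdn0.
apply: eqn_from_log.
- by rewrite gcdn_gt0 s0.
- by rewrite muln_gt0 !expn_gt0 !prime_gt0.
move=> r; rewrite logn_gcd //; last by rewrite muln_gt0 !expn_gt0 !prime_gt0.
rewrite !logn_pq // !lp_min //.
case: (eqVneq r p) => [rp|rp]; case: (eqVneq r q) => [rq|rq].
- by move: pq; rewrite -rp -rq eqxx.
- by rewrite rp; lia.
- by rewrite rq; lia.
- by lia.
Qed.

Lemma exp_uniq p q a b c e : prime p -> prime q -> p != q ->
  p ^ a * q ^ b = p ^ c * q ^ e -> a = c /\ b = e.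
Proof.
move=> pp qp pq E; split.
- by have := congr1 (logn p) E; rewrite !logn_pq // eqxx (negbTE pq) !muln1 !muln0 !addn0.
- by have := congr1 (logn q) E; rewrite !logn_pq // eqxx eq_sym (negbTE pq) !muln1 !muln0.
Qed.

Local Close Scope ring_scope.

Definition xD p q (D : {set 'I_(p ^ 2 * q ^ 2)}) (i k : nat) : bool :=
  [exists d in D, (lp p d == i) && (lp q d == k)].

Lemma memS p q (D : {set 'I_(p ^ 2 * q ^ 2)}) (s : 'I_(p ^ 2 * q ^ 2)) :
  prime p -> prime q -> p != q ->
  (forall d, d \in D -> (val d %| p ^ 2 * q ^ 2)%N) ->
  (s \in ICG_conn D) = xD D (lp p s) (lp q s).
Proof.
move=> pp qp pq HD; rewrite /ICG_conn /xD; apply/bigcupP/existsP.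
- move=> [d dD]; rewrite /Gn inE => /eqP gs; exists d; rewrite dD /=.
  have := gcd_pq s pp qp pq; rewrite gs.
  rewrite -{1}(gcdn_idPl (HD d dD)) gcd_pq // => /(exp_uniq pp qp pq) [-> ->].
  by rewrite !eqxx.
- move=> [d /andP[dD /andP[/eqP e1 /eqP e2]]]; exists d => //; rewrite /Gn inE.
  apply/eqP; rewrite gcd_pq // -e1 -e2 -(gcd_pq (val d) pp qp pq).
  exact/gcdn_idPl/HD.
Qed.

Lemma xD22 p q (D : {set 'I_(p ^ 2 * q ^ 2)}) :
  prime p -> prime q -> p != q ->
  (forall d, d \in D -> (val d %| p ^ 2 * q ^ 2)%N) -> xD D 2 2 = false.
Proof.
move=> pp qp pq HD; apply/existsP => -[d /andP[dD /andP[/eqP e1 /eqP e2]]].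
have := gcd_pq d pp qp pq; rewrite e1 e2 (gcdn_idPl (HD d dD)) => E.
by have := ltn_ord d; rewrite E ltnn.
Qed.

Local Open Scope ring_scope.

Lemma geom (z : algC) m : z ^+ m = 1 -> \sum_(t < m) z ^+ t = if z == 1 then m%:R else 0.
Proof.
case: eqP => [->|/eqP z1] E.
  by under eq_bigr do rewrite expr1n; rewrite sumr_const card_ord.
have := subrX1 z m; rewrite E subrr => /esym/eqP; rewrite mulf_eq0 subr_eq0 (negbTE z1) /=.
by move/eqP.
Qed.

Lemma sum_dvd e m (F : nat -> algC) : (0 < e)%N ->
  \sum_(0 <= s < m * e | (e %| s)%N) F s = \sum_(0 <= t < m) F (t * e)%N.
Proof.
move=> e0; elim: m => [|m IH]; first by rewrite mul0n !big_geq.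
rewrite mulSnr (big_cat_nat (n := m * e)) ?leq0n ?leq_addr // /= IH big_nat_recr //=.
congr (_ + _).
rewrite big_ltn_cond; last by lia.
rewrite dvdn_mull // big_nat_cond big1 ?addr0 // => i /andP[/andP[lo hi] di].
have : (e <= i - m * e)%N by apply: dvdn_leq; [lia | rewrite dvdn_sub // dvdn_mull].
lia.
Qed.

Lemma geo n (w : algC) e j : n.-primitive_root w -> (0 < e)%N -> (e %| n)%N ->
  \sum_(s < n) ((e %| s)%N : nat)%:R * w ^+ (s * j) =
  if (n %/ e %| j)%N then (n %/ e)%:R else 0.
Proof.
move=> wp e0 en.
set m := (n %/ e)%N; have ne : n = (m * e)%N by rewrite /m divnK.
transitivity (\sum_(0 <= s < n | (e %| s)%N) w ^+ (s * j)).
  rewrite big_mkord [RHS]big_mkcond /=; apply: eq_bigr => s _.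
  by case: (e %| s)%N; rewrite ?mul1r ?mul0r.
rewrite {1}ne sum_dvd // big_mkord.
have -> : \sum_(t < m) w ^+ (t * e * j) = \sum_(t < m) (w ^+ (e * j)) ^+ t.
  by apply: eq_bigr => t _; rewrite -exprM -mulnA mulnC.
rewrite geom.
  by rewrite -(prim_order_dvd wp) ne [(e * j)%N]mulnC dvdn_pmul2r.
by rewrite -exprM mulnC mulnA -ne exprM (prim_expr_order wp) expr1n.
Qed.

Definition ccC (i a : nat) : algC :=
  match i, a with
  | 0%N, 0%N => 1 | 0%N, 1%N => -1 | 1%N, 1%N => 1 | 1%N, 2%N => -1 | 2%N, 2%N => 1
  | _, _ => 0 end.

Lemma dvd_p2 p s : (p ^ 2 %| s)%N -> (p %| s)%N.
Proof. by apply: dvdn_trans; rewrite -{1}(expn1 p) dvdn_exp2l. Qed.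

Lemma ind_exp p i s : (i < 3)%N ->
  ((lp p s == i) : nat)%:R = \sum_(a < 3) ccC i a * ((p ^ a %| s)%N : nat)%:R :> algC.
Proof.
move=> i3; rewrite !big_ord_recr big_ord0 /= add0r expn0 expn1 dvd1n /lp.
case: (boolP (p ^ 2 %| s)%N) => h2; [have h1 := dvd_p2 h2 | case: (boolP (p %| s)%N) => h1];
  rewrite ?h1 ?h2; case: i i3 => [|[|[|]]] //= _; ring.
Qed.

Definition gp (p a j : nat) : algC := if (p ^ (2 - a) %| j)%N then (p ^ (2 - a))%:R else 0.

Lemma rr_gp p i j : (i < 3)%N -> \sum_(a < 3) ccC i a * gp p a j = (rr p%:Z i (lp p j))%:~R.
Proof.
move=> i3; rewrite !big_ord_recr big_ord0 /= add0r /gp /lp !subnn !subn0 expn0 expn1 dvd1n.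
have E1 : (p%:Z)%:~R = p%:R :> algC by [].
case: (boolP (p ^ 2 %| j)%N) => h2; [have h1 := dvd_p2 h2 | case: (boolP (p %| j)%N) => h1];
  rewrite ?h1 ?h2; case: i i3 => [|[|[|]]] //= _; rewrite /rr /= ?intrB ?intrM ?intrN ?E1 ?natrX;
  ring.
Qed.

Local Open Scope ring_scope.

Lemma intr_sum (I : Type) (r : seq I) (F : I -> int) :
  (\sum_(i <- r) F i)%:~R = \sum_(i <- r) (F i)%:~R :> algC.
Proof. by apply: (big_morph _ (@intrD _) (mulr0z 1)). Qed.

Lemma ndiv p q a b : prime p -> prime q -> (a < 3)%N -> (b < 3)%N ->
  ((p ^ 2 * q ^ 2) %/ (p ^ a * q ^ b) = p ^ (2 - a) * q ^ (2 - b))%N.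
Proof.
move=> pp qp a3 b3.
have E : (p ^ 2 * q ^ 2 = (p ^ (2 - a) * q ^ (2 - b)) * (p ^ a * q ^ b))%N.
  by rewrite mulnACA -!expnD !subnK // -ltnS.
by rewrite E mulnK // muln_gt0 !expn_gt0 !prime_gt0.
Qed.

Lemma copXY p q a b : prime p -> prime q -> p != q -> coprime (p ^ a) (q ^ b).
Proof. by move=> pp qp pq; rewrite coprimeXl // coprimeXr // prime_coprime // dvdn_prime2. Qed.

Lemma ind2 p q i k s : prime p -> prime q -> p != q -> (i < 3)%N -> (k < 3)%N ->
  (((lp p s == i) && (lp q s == k)) : nat)%:R =
  \sum_(a < 3) \sum_(b < 3) ccC i a * ccC k b * ((p ^ a * q ^ b %| s)%N : nat)%:R :> algC.
Proof.
move=> pp qp pq i3 k3.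
rewrite -mulnb natrM (ind_exp p _ i3) (ind_exp q _ k3) big_distrlr /=.
apply: eq_bigr => a _; apply: eq_bigr => b _.
by rewrite Gauss_dvd ?copXY // -mulnb natrM mulrACA.
Qed.

Lemma T_eq p q (w : algC) i k j : prime p -> prime q -> p != q ->
  (p ^ 2 * q ^ 2).-primitive_root w -> (i < 3)%N -> (k < 3)%N ->
  \sum_(s < p ^ 2 * q ^ 2) (((lp p s == i) && (lp q s == k)) : nat)%:R * w ^+ (s * j) =
  (rr p%:Z i (lp p j) * rr q%:Z k (lp q j))%:~R.
Proof.
move=> pp qp pq wp i3 k3.
rewrite (eq_bigr (fun s : 'I_(p ^ 2 * q ^ 2) => \sum_(a < 3) \sum_(b < 3)
   ccC i a * ccC k b * (((p ^ a * q ^ b %| s)%N : nat)%:R * w ^+ (s * j)))); last first.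
  move=> s _; rewrite ind2 // mulr_suml; apply: eq_bigr => a _.
  by rewrite mulr_suml; apply: eq_bigr => b _; rewrite mulrA.
rewrite intrM -(rr_gp p j i3) -(rr_gp q j k3) big_distrlr /=.
rewrite exchange_big; apply: eq_bigr => a _; rewrite exchange_big; apply: eq_bigr => b _.
rewrite -mulr_sumr geo //; last first.
- by rewrite dvdn_mul // dvdn_exp2l // -ltnS.
- by rewrite muln_gt0 !expn_gt0 !prime_gt0.
rewrite ndiv ?ltn_ord // Gauss_dvd ?copXY // /gp.
by case: (p ^ (2 - a) %| j)%N; case: (q ^ (2 - b) %| j)%N; rewrite /= ?natrM; ring.
Qed.

Definition idx8 : seq (nat * nat) := [:: (0,0);(0,1);(0,2);(1,0);(1,1);(1,2);(2,0);(2,1)]%N.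

Lemma Lam_big p q x u v :
  Lam p q x u v = \sum_(ik <- idx8) b2i (x ik.1 ik.2) * rr p ik.1 u * rr q ik.2 v.
Proof. by rewrite /idx8 !big_cons big_nil /Lam addr0 !addrA. Qed.

Lemma idx8P ik : ik \in idx8 -> (ik.1 < 3)%N && (ik.2 < 3)%N.
Proof.
by move: ik; apply/allP.
Qed.

Lemma decomp (x : nat -> nat -> bool) u v : x 2%N 2%N = false -> (u < 3)%N -> (v < 3)%N ->
  ((x u v) : nat)%:R =
  \sum_(ik <- idx8) ((x ik.1 ik.2) : nat)%:R * (((u == ik.1) && (v == ik.2)) : nat)%:R :> algC.
Proof.
move=> x22; rewrite /idx8 !big_cons big_nil.
case: u => [|[|[|]]] //; case: v => [|[|[|]]] //= _ _; rewrite ?x22 /=; ring.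
Qed.

Lemma b2iC b : (b2i b)%:~R = (b : nat)%:R :> algC.
Proof. by case: b. Qed.

Lemma lam_eq p q (D : {set 'I_(p ^ 2 * q ^ 2)}) (w : algC) j :
  prime p -> prime q -> p != q -> (p ^ 2 * q ^ 2).-primitive_root w ->
  (forall d, d \in D -> (val d %| p ^ 2 * q ^ 2)%N) ->
  \sum_(s in ICG_conn D) w ^+ (s * j) = (Lam p q (xD D) (lp p j) (lp q j))%:~R.
Proof.
move=> pp qp pq wp HD.
rewrite big_mkcond /=.
transitivity (\sum_(s < p ^ 2 * q ^ 2)
    ((xD D (lp p s) (lp q s)) : nat)%:R * w ^+ (s * j)).
  by apply: eq_bigr => s _; rewrite memS //; case: xD; rewrite ?mul1r ?mul0r.
rewrite (eq_bigr (fun s : 'I_(p ^ 2 * q ^ 2) => \sum_(ik <- idx8)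
   ((xD D ik.1 ik.2) : nat)%:R *
   ((((lp p s == ik.1) && (lp q s == ik.2)) : nat)%:R * w ^+ (s * j)))); last first.
  move=> s _; rewrite (decomp (xD22 pp qp pq HD) (lp_lt3 p s) (lp_lt3 q s)) mulr_suml.
  by apply: eq_bigr => ik _; rewrite mulrA.
rewrite exchange_big /= Lam_big intr_sum; apply: eq_big_seq => ik /idx8P /andP[i3 k3].
by rewrite -mulr_sumr T_eq // -mulrA !intrM b2iC.
Qed.

Lemma rr_wt p u : (0 < p)%N -> (u < 3)%N -> rr p%:Z u 2 = (wt p u)%:Z.
Proof.
move=> p0; case: u => [|[|[|]]] // _; rewrite /rr /wt /=.
- by rewrite -PoszM subzn // leq_pmulr.
- by rewrite subzn.
Qed.

Lemma lp0 r : lp r 0 = 2%N.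
Proof. by rewrite /lp dvdn0. Qed.

Lemma Ncount p q (w : algC) u v : prime p -> prime q -> p != q ->
  (p ^ 2 * q ^ 2).-primitive_root w -> (u < 3)%N -> (v < 3)%N ->
  (\sum_(s < p ^ 2 * q ^ 2) (((lp p s == u) && (lp q s == v)) : nat) = wt p u * wt q v)%N.
Proof.
move=> pp qp pq wp u3 v3.
have T := T_eq 0 pp qp pq wp u3 v3.
rewrite !lp0 !rr_wt ?prime_gt0 // -PoszM in T.
apply/eqP; rewrite -(eqr_nat algC) natr_sum.
rewrite -[X in _ == X]/(((wt p u * wt q v)%N)%:Z%:~R) -T.
by apply/eqP; apply: eq_bigr => s _; rewrite muln0 expr0 mulr1.
Qed.

Lemma count_eq p q (w : algC) x (P : pred int) : prime p -> prime q -> p != q ->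
  (p ^ 2 * q ^ 2).-primitive_root w ->
  count P [seq Lam p q x (lp p j) (lp q j) | j : 'I_(p ^ 2 * q ^ 2) <- enum 'I_(p ^ 2 * q ^ 2)] = cnt p q x P.
Proof.
move=> pp qp pq wp.
rewrite count_map -sum1_count big_enum_cond /= big_mkcond /=.
transitivity (\sum_(j < p ^ 2 * q ^ 2) \sum_(u < 3) \sum_(v < 3)
   (((lp p j == u) && (lp q j == v)) * P (Lam p q x u v)))%N.
  apply: eq_bigr => j _; rewrite !big_ord_recr !big_ord0 /=.
  by case: (lp p j) (lp_lt3 p j) => [|[|[|]]] //= _; case: (lp q j) (lp_lt3 q j) => [|[|[|]]] //= _;
    rewrite ?mul0n ?mul1n ?add0n ?addn0; case: ifP.
rewrite exchange_big; apply: eq_bigr => u _; rewrite exchange_big; apply: eq_bigr => v _.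
by rewrite -big_distrl /= (Ncount pp qp pq wp (ltn_ord u) (ltn_ord v)).
Qed.

Local Open Scope ring_scope.

Lemma modsub n g s : (0 < n)%N -> (g < n)%N -> (s < n)%N -> (((s + g) %% n + n - g) %% n = s)%N.
Proof.
move=> n0 gn sn; apply/eqP.
rewrite -{2}(modn_small sn) -(eqn_modDr g) subnK; last first.
  by apply: leq_trans (ltnW gn) (leq_addl _ _).
by rewrite modnDr modn_mod.
Qed.

Definition addo n (n0 : (0 < n)%N) (g s : 'I_n) : 'I_n := Ordinal (ltn_pmod (s + g) n0).

Lemma addo_inj n n0 g : injective (@addo n n0 g).
Proof.
move=> s1 s2 /(congr1 val) /= /eqP; rewrite eqn_modDr !modn_small // => /eqP.
exact: val_inj.
Qed.

Lemma adj_eig n (w : algC) (D : {set 'I_n}) : (0 < n)%N -> n.-primitive_root w ->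
  ICG_adj D *m (\matrix_(h < n, j < n) w ^+ (h * j)) =
  (\matrix_(h < n, j < n) w ^+ (h * j)) *m
     diag_mx (\row_(j < n) \sum_(s in ICG_conn D) w ^+ (s * j)).
Proof.
move=> n0 wp; apply/matrixP => g j; rewrite mul_mx_diag !mxE.
rewrite (reindex_inj (@addo_inj n n0 g)) /=.
rewrite mulrC mulr_suml [RHS]big_mkcond; apply: eq_bigr => s _; rewrite !mxE /=.
have -> : [exists s0 in ICG_conn D, val s0 == (((s + g) %% n) + n - g) %% n]%N = (s \in ICG_conn D).
  rewrite modsub // ?ltn_ord //; apply/existsP/idP => [[s0 /andP[s0S /eqP e]]|sS].
    by rewrite -(val_inj e).
  by exists s; rewrite sS eqxx.
rewrite -(prim_expr_mod wp) modnMml (prim_expr_mod wp) mulnDl exprD.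
by case: (s \in ICG_conn D); rewrite ?mul1r ?mul0r // mulrC.
Qed.

Lemma dvd_diag n (j k : 'I_n) : (n %| n - j + k)%N = (j == k).
Proof.
case: eqVneq => [->|jk].
  by rewrite subnK ?dvdnn // ltnW.
apply/negP => /dvdnP [c E].
have jn := ltn_ord j; have kn := ltn_ord k.
have jk' : (j : nat) <> k by move=> e; move/eqP: jk; apply; apply: val_inj.
have : c = 1%N by nia.
move=> c1; rewrite c1 mul1n in E; lia.
Qed.

Lemma WV n (w : algC) : (0 < n)%N -> n.-primitive_root w ->
  (\matrix_(j < n, h < n) w ^+ ((n - j) * h)) *m (\matrix_(h < n, k < n) w ^+ (h * k))
   = (n%:R)%:M.
Proof.
move=> n0 wp; apply/matrixP => j k; rewrite !mxE.
rewrite (eq_bigr (fun h : 'I_n => (w ^+ (n - j + k)) ^+ h)); last first.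
  by move=> h _; rewrite !mxE -exprD -exprM mulnDl [(h * k)%N]mulnC.
rewrite geom; last by rewrite -exprM mulnC exprM (prim_expr_order wp) expr1n.
by rewrite -(prim_order_dvd wp) dvd_diag; case: (j == k).
Qed.

Lemma detV_neq0 n (w : algC) : (0 < n)%N -> n.-primitive_root w ->
  \det (\matrix_(h < n, k < n) w ^+ (h * k)) != 0.
Proof.
move=> n0 wp; apply/negP => /eqP V0.
have := congr1 determinant (WV n0 wp); rewrite det_mulmx V0 mulr0 det_scalar.
by move/esym/eqP; rewrite expf_eq0 pnatr_eq0; case/andP => _ /eqP n00; move: n0; rewrite n00.
Qed.

Lemma char_eq n (A V : 'M[algC]_n) (d : 'rV_n) : \det V != 0 ->
  A *m V = V *m diag_mx d -> char_poly A = \prod_(i < n) ('X - (d 0 i)%:P).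
Proof.
move=> Vn AV.
have E : char_poly_mx A *m map_mx polyC V = map_mx polyC V *m char_poly_mx (diag_mx d).
  by rewrite /char_poly_mx mulmxBl mulmxBr mul_scalar_mx mul_mx_scalar -!map_mxM AV.
have := congr1 determinant E; rewrite !det_mulmx det_map_mx /= => E'.
have Vp : (\det V)%:P != 0 by rewrite polyC_eq0.
rewrite /char_poly; apply: (mulIf Vp); rewrite E' mulrC; congr (_ * _).
rewrite -/(char_poly (diag_mx d)) char_poly_trig ?diag_mx_is_trig //.
by apply: eq_bigr => i _; rewrite mxE eqxx mulr1n.
Qed.

Lemma Spec_eq n (w : algC) (D : {set 'I_n}) z : (0 < n)%N -> n.-primitive_root w ->
  Spec (ICG_adj D) z =
  count_mem z [seq \sum_(s in ICG_conn D) w ^+ (s * j) | j : 'I_n <- enum 'I_n].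
Proof.
move=> n0 wp; rewrite /Spec (char_eq (detV_neq0 n0 wp) (adj_eig D n0 wp)).
rewrite -mu_prod_XsubC big_map big_enum /=.
by congr (mup _ _); apply: eq_big => // i _; rewrite mxE.
Qed.

Local Open Scope ring_scope.

Lemma partC p q x y : prime p -> prime q -> (p < q)%N ->
  (forall P, cnt p q x P = cnt p q y P) -> agree x y.
Proof.
move=> pp qp pq H.
have p2 := prime_gt1 pp.
case: (ltngtP p 2) => [p1|p3|pe].
- by move: p1 p2; rewrite ltnNge => /negP.
- exact: (main_ge3 pp qp p3 pq H).
- by subst p; exact: (main_p2 qp pq H).
Qed.

Lemma xD_mem p q (D : {set 'I_(p ^ 2 * q ^ 2)}) (d : 'I_(p ^ 2 * q ^ 2)) :
  prime p -> prime q -> p != q ->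
  (forall d, d \in D -> (val d %| p ^ 2 * q ^ 2)%N) -> (val d %| p ^ 2 * q ^ 2)%N ->
  xD D (lp p d) (lp q d) -> d \in D.
Proof.
move=> pp qp pq HD dn /existsP[d' /andP[d'D /andP[/eqP e1 /eqP e2]]].
have : val d' = val d.
  by rewrite -(gcdn_idPl (HD d' d'D)) -(gcdn_idPl dn) !gcd_pq // e1 e2.
by move/val_inj => <-.
Qed.

Lemma D_incl p q (D1 D2 : {set 'I_(p ^ 2 * q ^ 2)}) : prime p -> prime q -> p != q ->
  (forall d, d \in D1 -> (val d %| p ^ 2 * q ^ 2)%N) ->
  (forall d, d \in D2 -> (val d %| p ^ 2 * q ^ 2)%N) ->
  agree (xD D1) (xD D2) -> forall d, d \in D1 -> d \in D2.
Proof.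
move=> pp qp pq HD1 HD2 Ag d dD.
have x1 : xD D1 (lp p d) (lp q d) by apply/existsP; exists d; rewrite dD !eqxx.
have nt : ~~ ((lp p d == 2%N) && (lp q d == 2%N)).
  apply/negP => /andP[/eqP a /eqP b]; move: x1; rewrite a b xD22 //.
rewrite Ag ?lp_lt3 // in x1.
exact: xD_mem (HD1 d dD) x1.
Qed.

Local Close Scope ring_scope.

Theorem theorem1p4 (p q : nat) (D1 D2 : {set 'I_(p ^ 2 * q ^ 2)}) :
  prime p -> prime q -> (p < q)%N ->
  (forall d, d \in D1 -> (val d %| p ^ 2 * q ^ 2)%N) ->
  (forall d, d \in D2 -> (val d %| p ^ 2 * q ^ 2)%N) ->
  Spec (ICG_adj D1) = Spec (ICG_adj D2) ->
  D1 = D2.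
Proof.
move=> pp qp pq HD1 HD2 HS.
have pnq : p != q by rewrite neq_ltn pq.
have n0 : (0 < p ^ 2 * q ^ 2)%N by rewrite muln_gt0 !expn_gt0 !prime_gt0.
have [w wp] := C_prim_root_exists n0.
pose M (D : {set 'I_(p ^ 2 * q ^ 2)}) :=
  [seq Lam p q (xD D) (lp p j) (lp q j) | j : 'I_(p ^ 2 * q ^ 2) <- enum 'I_(p ^ 2 * q ^ 2)].
have L : forall D : {set 'I_(p ^ 2 * q ^ 2)}, (forall d, d \in D -> (val d %| p ^ 2 * q ^ 2)%N) ->
   forall z, Spec (ICG_adj D) z = count_mem z (map (fun k : int => (k%:~R)%R : algC) (M D)).
  move=> D HD z; rewrite (Spec_eq D z n0 wp); congr (count_mem z _).
  rewrite /M -[RHS]map_comp; apply: eq_map => j /=; exact: lam_eq.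
have P1 : perm_eq (map (fun k : int => (k%:~R)%R : algC) (M D1))
                  (map (fun k : int => (k%:~R)%R : algC) (M D2)).
  by rewrite /perm_eq; apply/allP => z _; apply/eqP; rewrite -!L // HS.
have P2 := perm_map_inj (@intr_inj algC) P1.
have HC : forall P, cnt p q (xD D1) P = cnt p q (xD D2) P.
  by move=> P; rewrite -!(count_eq _ _ pp qp pnq wp); move/permP: P2 => ->.
have Ag := partC pp qp pq HC.
have Ag' : agree (xD D2) (xD D1) by move=> i k i3 k3 nt; rewrite Ag.
apply/setP => d; apply/idP/idP; [exact: (D_incl pp qp pnq HD1 HD2 Ag) | exact: (D_incl pp qp pnq HD2 HD1 Ag')].
Qed.
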